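(* Let $G$ be a virtually polycyclic group and let $M$ be a finitely generated module over the integral group ring $\mathbb{Z}G$. Then the depth $D(M)$ of $M$ in the category of $\mathbb{Z}G$-modules is finite.
   Context: In the category of $\mathbb{Z}G$-modules, $N\leqslant^d M$ means there exist module homomorphisms $f:N\to M$, $g:M\to N$ with $g\circ f=\mathrm{id}_N$; $N<^p M$ means $N\leqslant^d M$ and $N\not\cong M$. A chain of length $k$ for $M$ is $N_k<^p\cdots<^p N_1\leqslant^d M$; $D(M)$ is the supremum of the lengths of all chains for $M$. A group is virtually polycyclic if it has a polycyclic subgroup of finite index. *)

(* Defs.v *)
(* Infinite groups are modelled by MathComp's (not
   necessarily finite) [groupType] from boot/monoid.v; ZG-modules are
   abelian groups ([zmodType]) with a Z-linear action of G. *)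
From HB Require Import structures.
From mathcomp Require Import all_boot all_order all_algebra.

Set Implicit Arguments.
Unset Strict Implicit.
Unset Printing Implicit Defensive.

Import GRing.Theory.

Section GroupDefs.
Variable G : groupType.
Local Open Scope group_scope.

Definition is_subgroup (H : G -> Prop) : Prop :=
  H 1 /\ (forall x y, H x -> H y -> H (x * y^-1)).

Definition zpowg (x : G) (k : int) : G :=
  match k with Posz n => x ^+ n | Negz n => x ^- n.+1 end.

Definition cyclic_normal_step (H K : G -> Prop) : Prop :=
  [/\ is_subgroup H, is_subgroup K, (forall x, K x -> H x),
      (forall h k, H h -> K k -> K (k ^ h)) &
      exists2 x, H x & forall y, H y -> exists k : int, K ((zpowg x k)^-1 * y)].

Definition polycyclic_subgroup (H : G -> Prop) : Prop :=
  exists (n : nat) (S : nat -> G -> Prop),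
    [/\ (forall x, S 0%N x <-> H x), (forall x, S n x <-> x = 1) &
        forall i, (i < n)%N -> cyclic_normal_step (S i) (S i.+1)].

Definition finite_index (H : G -> Prop) : Prop :=
  exists s : seq G, forall g : G, exists2 t, t \in s & H (t^-1 * g).

Definition virtually_polycyclic : Prop :=
  exists H : G -> Prop,
    [/\ is_subgroup H, finite_index H & polycyclic_subgroup H].

End GroupDefs.

Local Open Scope ring_scope.

Record gmodule (G : groupType) := GModule {
  gcarrier :> zmodType;
  gact : G -> gcarrier -> gcarrier;
  gact_add : forall g (u v : gcarrier), gact g (u + v) = gact g u + gact g v;
  gact_one : forall v, gact 1%g v = v;
  gact_mul : forall g h v, gact (g * h)%g v = gact g (gact h v)
}.

Section ModuleDefs.
Variable G : groupType.

Definition gmod_hom (M N : gmodule G) (f : M -> N) : Prop :=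
  (forall u v, f (u + v) = f u + f v) /\
  (forall g m, f (gact g m) = gact g (f m)).

Definition gmod_iso (M N : gmodule G) : Prop :=
  exists f : M -> N, gmod_hom f /\ bijective f.

(* N <=^d M : N is a direct summand (retract) of M. *)
Definition dsub (N M : gmodule G) : Prop :=
  exists (f : N -> M) (g : M -> N), [/\ gmod_hom f, gmod_hom g & cancel f g].

Definition psub (N M : gmodule G) : Prop := dsub N M /\ ~ gmod_iso N M.

Definition gmod_fin_gen (M : gmodule G) : Prop :=
  exists s : seq M, forall m : M, exists t : seq (int * G * nat),
    m = \sum_(p <- t) (gact p.1.2 (nth 0 s p.2)) *~ p.1.1.

Definition gmod_chain (M : gmodule G) (k : nat) (N : nat -> gmodule G) : Prop :=
  ((0 < k)%N -> dsub (N 1%N) M) /\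
  (forall i, (1 <= i)%N -> (i < k)%N -> psub (N i.+1) (N i)).

Definition depth_finite (M : gmodule G) : Prop :=
  exists B : nat, forall (k : nat) (N : nat -> gmodule G),
    gmod_chain M k N -> (k <= B)%N.

End ModuleDefs.

(* Main.v *)
Require Import Defs.
From HB Require Import structures.
From mathcomp Require Import all_boot all_order all_algebra.
From Stdlib Require Import ClassicalEpsilon.

Set Implicit Arguments.
Unset Strict Implicit.
Unset Printing Implicit Defensive.
Import GRing.Theory Num.Theory.
Local Open Scope ring_scope.


Section Basics.
Variable G : groupType.
Variable M : gmodule G.

Lemma gact0 g : gact g (0 : M) = 0.
Proof.
have e := gact_add g (0 : M) 0; rewrite addr0 -{1}[gact g 0]addr0 in e.
by move/addrI: e.
Qed.
Lemma gactN g (u : M) : gact g (- u) = - gact g u.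
Proof. by apply/eqP; rewrite -subr_eq0 opprK -gact_add addNr gact0. Qed.
Lemma gactB g (u v : M) : gact g (u - v) = gact g u - gact g v.
Proof. by rewrite gact_add gactN. Qed.
Lemma gact_sum (I : Type) (r : seq I) (P : pred I) (F : I -> M) g :
  gact g (\sum_(i <- r | P i) F i) = \sum_(i <- r | P i) gact g (F i).
Proof. exact: (big_morph _ (gact_add g) (gact0 g)). Qed.

Definition subm (H : G -> Prop) (P : M -> Prop) :=
  [/\ P 0, (forall u v, P u -> P v -> P (u - v)) &
      (forall h u, H h -> P u -> P (gact h u))].

Definition gspan (H : G -> Prop) (s : seq M) (m : M) :=
  forall P, subm H P -> (forall y, y \in s -> P y) -> P m.

Definition Noeth (H : G -> Prop) (X : M -> Prop) :=
  forall P, subm H P -> (forall z, P z -> X z) ->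
  exists t : seq M, (forall y, y \in t -> P y) /\ (forall z, P z -> gspan H t z).

Variable H : G -> Prop.

Lemma gspan_subm s : subm H (gspan H s).
Proof.
split.
- by move=> P [] .
- by move=> u v Hu Hv P PP Ps; case: (PP) => _ PB _; apply: PB; [apply: Hu|apply: Hv].
- by move=> h u Hh Hu P PP Ps; case: (PP) => _ _ PA; apply: PA => //; apply: Hu.
Qed.

Lemma gspan_min (P : M -> Prop) s : subm H P -> (forall y, y \in s -> P y) ->
  forall m, gspan H s m -> P m.
Proof. by move=> PP Ps m; apply. Qed.

Lemma gspan_mem s y : y \in s -> gspan H s y.
Proof. by move=> ys P _ Ps; apply: Ps. Qed.

Section SubmLemmas.
Variable P : M -> Prop.
Hypothesis PP : subm H P.
Lemma subm0 : P 0. Proof. by case: PP. Qed.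
Lemma submB u v : P u -> P v -> P (u - v). Proof. by case: PP => _ B _; apply: B. Qed.
Lemma submA h u : H h -> P u -> P (gact h u). Proof. by case: PP => _ _ A; apply: A. Qed.
Lemma submN u : P u -> P (- u).
Proof. by move=> Pu; rewrite -sub0r; apply: submB => //; apply: subm0. Qed.
Lemma submD u v : P u -> P v -> P (u + v).
Proof. by move=> Pu Pv; rewrite -[v]opprK; apply: submB => //; apply: submN. Qed.
Lemma submMn u n : P u -> P (u *+ n).
Proof. move=> Pu; elim: n => [|n IH]; first by rewrite mulr0n; apply: subm0.
by rewrite mulrS; apply: submD. Qed.
Lemma submMz u (n : int) : P u -> P (u *~ n).
Proof. by move=> Pu; case: n => n; [apply: submMn|rewrite NegzE mulrNz; apply/submN/submMn]. Qed.
Lemma submS n (F : nat -> M) : (forall i, (i < n)%N -> P (F i)) -> P (\sum_(i < n) F i).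
Proof.
elim: n => [|n IH] HF; first by rewrite big_ord0; apply: subm0.
rewrite big_ord_recr /=; apply: submD; last exact: HF.
by apply: IH => i lt; apply: HF; apply: ltnW.
Qed.
Lemma submSs (I : Type) (r : seq I) (F : I -> M) : (forall i, P (F i)) -> P (\sum_(i <- r) F i).
Proof.
move=> HF; elim: r => [|a r IH]; first by rewrite big_nil; apply: subm0.
by rewrite big_cons; apply: submD.
Qed.
End SubmLemmas.

Lemma gspan0 s : gspan H s 0. Proof. exact (subm0 (gspan_subm s)). Qed.
Lemma gspanB s u v : gspan H s u -> gspan H s v -> gspan H s (u - v).
Proof. exact (submB (gspan_subm s) (u:=u) (v:=v)). Qed.
Lemma gspanD s u v : gspan H s u -> gspan H s v -> gspan H s (u + v).
Proof. exact (submD (gspan_subm s) (u:=u) (v:=v)). Qed.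
Lemma gspanN s u : gspan H s u -> gspan H s (- u).
Proof. exact (submN (gspan_subm s) (u:=u)). Qed.
Lemma gspanA s h u : H h -> gspan H s u -> gspan H s (gact h u).
Proof. exact (submA (gspan_subm s) (h:=h) (u:=u)). Qed.
Lemma gspanMz s u n : gspan H s u -> gspan H s (u *~ n).
Proof. exact (submMz (gspan_subm s) (u:=u) n). Qed.


End Basics.

Section Base.
Variable G : groupType.
Variable M : gmodule G.

Lemma subm_ext (H H' : G -> Prop) (P : M -> Prop) :
  (forall g, H' g -> H g) -> subm H P -> subm H' P.
Proof. by move=> HH [P0 PB PA]; split => // h u /HH; apply: PA. Qed.

Lemma gspan_ext (H H' : G -> Prop) s (m : M) :
  (forall g, H g -> H' g) -> gspan H s m -> gspan H' s m.
Proof. by move=> HH sm P PP Ps; apply: sm => //; apply: subm_ext PP. Qed.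

Lemma Noeth_ext (H H' : G -> Prop) (X : M -> Prop) :
  (forall g, H g <-> H' g) -> Noeth H X -> Noeth H' X.
Proof.
move=> HH NX P PP PX; have [|t [tP Pt]] := NX P _ PX.
  by apply: subm_ext PP => g /HH.
by exists t; split => // z /Pt; apply: gspan_ext => g /HH.
Qed.

Lemma gspan_sub (H : G -> Prop) (s s' : seq M) (m : M) :
  (forall y, y \in s -> gspan H s' y) -> gspan H s m -> gspan H s' m.
Proof. by move=> ss; apply: gspan_min => //; apply: gspan_subm. Qed.

Definition H1 : G -> Prop := fun g => g = 1%g.

Lemma gspan_cons_dec (y : M) s m : gspan H1 (y :: s) m ->
  exists n : int, exists2 w, gspan H1 s w & m = y *~ n + w.
Proof.
move=> sm; apply: (gspan_min (P := fun m => exists n : int, exists2 w, gspan H1 s w & m = y *~ n + w) _ _ sm); first split.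
- by exists 0; exists 0; [apply: gspan0 | rewrite mulr0z addr0].
- move=> u v [n1 [w1 s1 ->]] [n2 [w2 s2 ->]]; exists (n1 - n2).
  exists (w1 - w2); first by apply: gspanB.
  by rewrite mulrzBr opprD addrACA.
- by move=> h u -> [n [w sw ->]]; exists n; exists w; rewrite // gact_one.
- move=> z; rewrite inE => /orP [/eqP ->|zs].
    by exists 1; exists 0; [apply: gspan0 | rewrite addr0].
  by exists 0; exists z; [apply: gspan_mem | rewrite mulr0z add0r].
Qed.

Lemma min_pos (Q : nat -> Prop) n : (0 < n)%N -> Q n ->
  exists n0, [/\ (0 < n0)%N, Q n0 & forall r, (0 < r)%N -> (r < n0)%N -> ~ Q r].
Proof.
elim/ltn_ind: n => n IH n0 Qn.
case: (classic (exists r, [/\ (0 < r)%N, (r < n)%N & Q r])) => [[r [r0 rn Qr]]|no].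
  exact: IH rn r0 Qr.
by exists n; split => // r r0 rn Qr; apply: no; exists r.
Qed.

Lemma Noeth_Z (s : seq M) : Noeth H1 (gspan H1 s).
Proof.
elim: s => [|y s IH].
  by move=> P PP PX; exists [::]; split.
move=> P PP PX.
pose I (n : int) := exists2 w, gspan H1 s w & P (y *~ n + w).
case: (classic (exists n, I n /\ n != 0)) => [[n [In nn0]]|no]; last first.
  have sub : forall z, P z -> gspan H1 s z.
    move=> z Pz; have [n [w sw ez]] := gspan_cons_dec (PX _ Pz).
    case: (eqVneq n 0) => [n0|nn0]; first by rewrite ez n0 mulr0z add0r.
    by exfalso; apply: no; exists n; split => //; exists w => //; rewrite -ez.
  have [t [tP Pt]] := IH P PP sub.
  by exists t.
have [m [m0 Im mmin]] : exists m : nat, [/\ (0 < m)%N, I m &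
     forall r : nat, (0 < r)%N -> (r < m)%N -> ~ I r].
  case: n In nn0 => k Ik kn0.
    by apply: min_pos Ik; rewrite lt0n; move: kn0; rewrite eqz_nat.
  apply: (@min_pos (fun k : nat => I k) k.+1) => //.
  case: Ik => w sw Pw; exists (- w); first by apply: gspanN.
  rewrite NegzE mulrNz in Pw.
  by have := submN PP Pw; rewrite opprD opprK.
case: Im => w0 sw0 Pw0.
pose P' := fun z => P z /\ gspan H1 s z.
have PP' : subm H1 P'.
  split; first by split; [apply: subm0 PP | apply: gspan0].
  - by move=> u v [Pu su] [Pv sv]; split; [apply: (submB PP) | apply: gspanB].
  - by move=> h u Hh [Pu su]; split; [apply: (submA PP) | apply: gspanA].
have [t [tP Pt]] := IH P' PP' (fun z (h : P' z) => proj2 h).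
exists ((y *~ m + w0) :: t); split.
  by move=> z; rewrite inE => /orP [/eqP ->|/tP []].
move=> z Pz; clear In nn0 n; have [n [w sw ez]] := gspan_cons_dec (PX _ Pz).
pose q := (n %/ m)%Z; pose r := (n %% m)%Z.
have ez' : z - (y *~ m + w0) *~ q = y *~ r + (w - w0 *~ q).
  rewrite ez {1}(divz_eq n m) -/q -/r mulrzDr mulrzDl mulrzA_C mulrC.
  have key : forall a r w b : M, a + r + w - (a + b) = r + (w - b).
    by move=> a r1 w1 b; rewrite opprD addrACA [_ + - a]addrC addKr.
  exact: key.
have Pr : P (y *~ r + (w - w0 *~ q)).
  by rewrite -ez'; apply: (submB PP) => //; apply: (submMz PP).
have r0 : r = 0.
  have rge : 0 <= r by apply: modz_ge0; rewrite eqz_nat -lt0n.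
  have rlt : r < m by apply: ltz_pmod; rewrite ltz_nat.
  move: rge rlt Pr; case E: r => [r'|r'] // _; rewrite ltz_nat => rlt Pr.
  move: rlt Pr; case: r' E => // r' E rlt Pr; exfalso; apply: (mmin r'.+1) => //.
  by exists (w - w0 *~ q) => //; apply: gspanB => //; apply: gspanMz.
rewrite r0 mulr0z add0r in ez'.
have : gspan H1 t (z - (y *~ m + w0) *~ q).
  apply: Pt; split; first by apply: (submB PP) => //; apply: (submMz PP).
  by rewrite ez'; apply: gspanB => //; apply: gspanMz.
move=> sp; rewrite -[z](subrK ((y *~ m + w0) *~ q)).
apply: gspanD.
- by apply: gspan_sub sp => u ut; apply: gspan_mem; rewrite inE ut orbT.
- by apply: gspanMz; apply: gspan_mem; rewrite mem_head.
Qed.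

End Base.

Lemma choice_fun (A B : Type) (R : A -> B -> Prop) :
  (forall a, exists b, R a b) -> exists f : A -> B, forall a, R a (f a).
Proof.
move=> HR; exists (fun a => proj1_sig (constructive_indefinite_description _ (HR a))).
by move=> a; case: (constructive_indefinite_description _ (HR a)).
Qed.

Section Step.
Variable G : groupType.
Variable M : gmodule G.
Variables H K : G -> Prop.
Hypothesis Hsg : is_subgroup H.
Hypothesis Ksg : is_subgroup K.
Hypothesis KH : forall g, K g -> H g.
Hypothesis Knorm : forall h k, H h -> K k -> K (k ^ h)%g.
Variable x : G.
Hypothesis Hx : H x.
Hypothesis Hgen : forall y, H y -> exists k : int, K ((zpowg x k)^-1 * y)%g.

Lemma sg1 (S : G -> Prop) : is_subgroup S -> S 1%g. Proof. by case. Qed.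
Lemma sgV (S : G -> Prop) a : is_subgroup S -> S a -> S a^-1%g.
Proof. by move=> [S1 SM] Sa; have := SM _ _ S1 Sa; rewrite mul1g. Qed.
Lemma sgM (S : G -> Prop) a b : is_subgroup S -> S a -> S b -> S (a * b)%g.
Proof. by move=> SS Sa Sb; have := (proj2 SS) _ _ Sa (sgV SS Sb); rewrite invgK. Qed.
Lemma sgX (S : G -> Prop) a n : is_subgroup S -> S a -> S (a ^+ n)%g.
Proof. by move=> SS Sa; elim: n => [|n IH]; [rewrite expg0; apply: sg1|rewrite expgS; apply: sgM]. Qed.

Local Notation X k := (x ^+ k)%g.

Lemma HX k : H (X k). Proof. exact: sgX. Qed.

Lemma gactV g (u : M) : gact g^-1%g (gact g u) = u.
Proof. by rewrite -gact_mul mulVg gact_one. Qed.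
Lemma gactVK g (u : M) : gact g (gact g^-1%g u) = u.
Proof. by rewrite -gact_mul mulgV gact_one. Qed.

Definition elt d (c : nat -> M) : M := \sum_(k < d) gact (X k) (c k).
Definition shift (c : nat -> M) : nat -> M := fun k => if k is k'.+1 then c k' else 0.

Lemma elt0 c : elt 0 c = 0. Proof. by rewrite /elt big_ord0. Qed.
Lemma eltS d c : elt d.+1 c = elt d c + gact (X d) (c d).
Proof. by rewrite /elt big_ord_recr. Qed.
Lemma elt_zero d : elt d (fun _ => 0) = 0.
Proof. by rewrite /elt big1 // => i _; rewrite gact0. Qed.
Lemma eltB d c1 c2 : elt d (fun k => c1 k - c2 k) = elt d c1 - elt d c2.
Proof. by rewrite /elt -sumrB; apply: eq_bigr => i _; rewrite gactB. Qed.

Lemma elt_shift d c : gact x (elt d c) = elt d.+1 (shift c).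
Proof.
rewrite /elt big_ord_recl /= gact0 add0r gact_sum; apply: eq_bigr => i _.
by rewrite /bump /= add1n expgS gact_mul.
Qed.

Lemma elt_shiftn j d c : gact (X j) (elt d c) = elt (j + d) (iter j shift c).
Proof.
elim: j => [|j IH]; first by rewrite expg0 gact_one.
by rewrite expgS gact_mul IH elt_shift addSn.
Qed.

Lemma elt_pad d d' c : (d <= d')%N ->
  elt d' (fun k => if (k < d)%N then c k else 0) = elt d c.
Proof.
move=> le; rewrite /elt [RHS](big_ord_widen d' (fun k => gact (X k) (c k)) le) [RHS]big_mkcond.
by apply: eq_bigr => i _; case: ifP => //; rewrite gact0.
Qed.

Lemma gactXX a b (u : M) : gact (X a) (gact (X b) u) = gact (X b) (gact (X a) u).
Proof. by rewrite -!gact_mul -!expgnDr addnC. Qed.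

Lemma Kconj k h : K k -> H h -> K (k ^ h)%g. Proof. by move=> Kk Hh; apply: Knorm. Qed.

Lemma elt_act k d c : K k ->
  gact k (elt d c) = elt d (fun i => gact (k ^ X i)%g (c i)).
Proof.
move=> Kk; rewrite /elt gact_sum; apply: eq_bigr => i _.
by rewrite -!gact_mul -conjgC.
Qed.

Variable s : seq M.
Local Notation V := (gspan K s).
Definition Vc d (c : nat -> M) := forall k, (k < d)%N -> V (c k).

Lemma Vc_shift j d c : Vc d c -> Vc (j + d) (iter j shift c).
Proof.
elim: j => [//|j IH] Vcc k; rewrite addSn /=.
case: k => [|k] lt; first exact: gspan0.
by apply: IH => //.
Qed.

Lemma Vc_pad d d' c : Vc d c -> Vc d' (fun k => if (k < d)%N then c k else 0).
Proof. by move=> Vcc k _; case: ifP => [/Vcc //|_]; apply: gspan0. Qed.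

Lemma Vc_sub d c1 c2 : Vc d c1 -> Vc d c2 -> Vc d (fun k => c1 k - c2 k).
Proof. by move=> V1 V2 k lt; apply: gspanB; [apply: V1|apply: V2]. Qed.

Lemma Vc_act d c k : K k -> Vc d c -> Vc d (fun i => gact (k ^ X i)%g (c i)).
Proof. by move=> Kk Vcc i lt; apply: gspanA; [apply: Kconj => //; apply: HX | apply: Vcc]. Qed.

Lemma Vc_le d d' c : (d' <= d)%N -> Vc d c -> Vc d' c.
Proof. by move=> le Vcc k lt; apply: Vcc; apply: leq_trans le. Qed.

Definition Wdec (m : M) := exists a d c, Vc d c /\ gact (X a) m = elt d c.


Lemma Wdec_all m : gspan H s m -> Wdec m.
Proof.
move=> sm; apply: (gspan_min (P := Wdec) _ _ sm); first split.
- by exists 0%N, 0%N, (fun _ => 0); split; [move=> k | rewrite elt0 gact0].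
- move=> u v [a1 [d1 [c1 [V1 E1]]]] [a2 [d2 [c2 [V2 E2]]]].
  have E1' : gact (X (a2 + a1)) u = elt (a2 + d1) (iter a2 shift c1).
    by rewrite expgnDr gact_mul E1 elt_shiftn.
  have E2' : gact (X (a2 + a1)) v = elt (a1 + d2) (iter a1 shift c2).
    by rewrite addnC expgnDr gact_mul E2 elt_shiftn.
  set D1 := (a2 + d1)%N in E1'; set D2 := (a1 + d2)%N in E2'.
  set c1' := iter a2 shift c1 in E1'; set c2' := iter a1 shift c2 in E2'.
  have V1' : Vc D1 c1' by apply: Vc_shift.
  have V2' : Vc D2 c2' by apply: Vc_shift.
  exists (a2 + a1)%N, (maxn D1 D2).
  exists (fun k => (if (k < D1)%N then c1' k else 0) - (if (k < D2)%N then c2' k else 0)).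
  split; first by apply: Vc_sub; apply: Vc_pad.
  rewrite eltB !elt_pad ?leq_maxl ?leq_maxr // -E1' -E2'.
  by rewrite gactB.
- move=> h u Hh [a [d [c [Vcc E]]]].
  have [k Kk0] := Hgen Hh.
  have [kk Kk eh] : exists2 kk, K kk & h = (zpowg x k * kk)%g.
    by exists ((zpowg x k)^-1 * h)%g => //; rewrite mulVKg.
  have Kk' : K (kk ^ (X a)^-1)%g by apply: Kconj => //; apply: sgV => //; apply: HX.
  have E' : gact (X a) (gact kk u) = elt d (fun i => gact ((kk ^ (X a)^-1) ^ X i)%g (c i)).
    by rewrite -gact_mul conjgCV gact_mul E elt_act.
  have V' := Vc_act Kk' Vcc.
  rewrite eh gact_mul; case: k {Kk0 eh} => n.
  + exists a, (n + d)%N, (iter n shift (fun i => gact ((kk ^ (X a)^-1) ^ X i)%g (c i))).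
    split; first by apply: Vc_shift.
    by rewrite /= gactXX E' elt_shiftn.
  + exists (n.+1 + a)%N, d, (fun i => gact ((kk ^ (X a)^-1) ^ X i)%g (c i)).
    split => //.
    by rewrite /= addnC expgnDr gact_mul gactVK E'.
- move=> y ys; exists 0%N, 1%N, (fun _ => y); split.
    by move=> k _; apply: gspan_mem.
  by rewrite eltS elt0 add0r !expg0 !gact_one.
Qed.


Section Noeth.
Hypothesis IHK : Noeth K V.
Variable P : M -> Prop.
Hypothesis PP : subm H P.
Hypothesis PX : forall z, P z -> gspan H s z.

Definition L d (v : M) := V v /\ exists c, Vc d c /\ P (gact (X d) v + elt d c).

Lemma L_subm d : subm K (L d).
Proof.
split.
- split; first exact: gspan0.
  by exists (fun _ => 0); split; [move=> k _; apply: gspan0 | rewrite gact0 elt_zero addr0; apply: (subm0 PP)].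
- move=> u v [Vu [c1 [V1 P1]]] [Vv [c2 [V2 P2]]]; split; first exact: gspanB.
  exists (fun k => c1 k - c2 k); split; first exact: Vc_sub.
  rewrite gactB eltB addrACA -opprD; exact: (submB PP).
- move=> k u Kk [Vu [c [Vcc Pc]]]; split; first by apply: gspanA.
  have Kk' : K (k ^ (X d)^-1)%g by apply: Kconj => //; apply: sgV => //; apply: HX.
  exists (fun i => gact ((k ^ (X d)^-1) ^ X i)%g (c i)); split; first exact: Vc_act.
  have := submA PP (KH Kk') Pc.
  by rewrite gact_add elt_act // -gact_mul -conjgCV gact_mul.
Qed.

Lemma L_S d v : L d v -> L d.+1 v.
Proof.
move=> [Vv [c [Vcc Pc]]]; split => //; exists (shift c); split.
  by move=> [|k] lt /=; [apply: gspan0 | apply: Vcc].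
have := submA PP Hx Pc.
by rewrite gact_add elt_shift -gact_mul -expgS.
Qed.

Lemma L_le d d' v : (d <= d')%N -> L d v -> L d' v.
Proof.
move=> /subnK <-; elim: (d' - d)%N => [//|n IH] Lv.
by rewrite addSn; apply: L_S; apply: IH.
Qed.

Lemma list_max (Q : nat -> M -> Prop) (t : seq M) :
  (forall n n' z, (n <= n')%N -> Q n z -> Q n' z) ->
  (forall z, z \in t -> exists n, Q n z) -> exists N, forall z, z \in t -> Q N z.
Proof.
move=> mono; elim: t => [|y t IH] ht; first by exists 0%N.
have [n Qn] := ht y (mem_head _ _).
have [N QN] : exists N, forall z, z \in t -> Q N z.
  by apply: IH => z zt; apply: ht; rewrite inE zt orbT.
exists (maxn n N) => z; rewrite inE => /orP [/eqP ->|zt].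
  by apply: mono Qn; apply: leq_maxl.
by apply: mono (QN _ zt); apply: leq_maxr.
Qed.

Lemma P_fg : exists t : seq M, (forall y, y \in t -> P y) /\ (forall z, P z -> gspan H t z).
Proof.
pose U v := exists d, L d v.
have UK : subm K U.
  split; first by exists 0%N; apply: (subm0 (L_subm 0)).
  - move=> u v [d1 L1] [d2 L2]; exists (maxn d1 d2); apply: (submB (L_subm _)).
      by apply: L_le L1; apply: leq_maxl.
    by apply: L_le L2; apply: leq_maxr.
  - by move=> h u Kh [d Lu]; exists d; apply: (submA (L_subm _)).
have [u [uU Uu]] := IHK UK (fun z Uz => let: ex_intro d Lz := Uz in proj1 Lz).
have [N uN] := list_max (Q := L) (@L_le) uU.
have UN : forall v, U v -> L N v.
  by move=> v /Uu; apply: (gspan_min (L_subm N) uN).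
have [gl hgl] := choice_fun (fun d => IHK (L_subm d) (fun z Lz => proj1 Lz)).
have [cw hcw] : exists cw : nat * M -> nat -> M, forall p, L p.1 p.2 ->
    Vc p.1 (cw p) /\ P (gact (X p.1) p.2 + elt p.1 (cw p)).
  apply: (choice_fun (R := fun p c => L p.1 p.2 -> Vc p.1 c /\ P (gact (X p.1) p.2 + elt p.1 c))) => -[d y]; case: (classic (L d y)) => [[_ [c hc]]|nL].
    by exists c.
  by exists (fun _ => 0).
pose tf d y := gact (X d) y + elt d (cw (d, y)).
pose T := flatten [seq [seq tf d y | y <- gl d] | d <- iota 0 N.+1].
have Tmem : forall d y, (d <= N)%N -> y \in gl d -> tf d y \in T.
  move=> d y dN yg; apply/flattenP; exists [seq tf d y | y <- gl d].
    by apply/mapP; exists d => //; rewrite mem_iota add0n ltnS dN.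
  by apply/mapP; exists y.
have TP : forall z, z \in T -> P z.
  move=> z /flattenP [l /mapP [d _ ->] /mapP [y yg ->]].
  have [_ ] := hcw (d, y) ((proj1 (hgl d)) y yg); done.
exists T; split => //.
have key : forall d c, Vc d c -> P (elt d c) -> gspan H T (elt d c).
  elim=> [|d IH] c Vcc Pc; first by rewrite elt0; apply: gspan0.
  have Ld : L d (c d).
    split; first by apply: Vcc.
    exists c; split; first by apply: Vc_le Vcc.
    by rewrite addrC -eltS.
  have [j [D [Edj DN LD]]] : exists j D, [/\ d = (j + D)%N, (D <= N)%N & L D (c d)].
    case: (leqP d N) => dN; first by exists 0%N, d.
    exists (d - N)%N, N; split => //; first by rewrite subnK // ltnW.
    by apply: UN; exists d.
  pose Q w := exists c', [/\ Vc d c', P (gact (X d) w + elt d c') &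
                          gspan H T (gact (X d) w + elt d c')].
  have QK : subm K Q.
    split.
    - exists (fun _ => 0); split; first by move=> k _; apply: gspan0.
        by rewrite gact0 elt_zero addr0; apply: (subm0 PP).
      by rewrite gact0 elt_zero addr0; apply: gspan0.
    - move=> w1 w2 [c1 [V1 P1 S1]] [c2 [V2 P2 S2]].
      exists (fun k => c1 k - c2 k); split; first exact: Vc_sub.
        by rewrite gactB eltB addrACA -opprD; exact: (submB PP).
      by rewrite gactB eltB addrACA -opprD; exact: gspanB.
    - move=> k w Kk [c1 [V1 P1 S1]].
      have Kk' : K (k ^ (X d)^-1)%g by apply: Kconj => //; apply: sgV => //; apply: HX.
      exists (fun i => gact ((k ^ (X d)^-1) ^ X i)%g (c1 i)); split; first exact: Vc_act.
        have := submA PP (KH Kk') P1.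
        by rewrite gact_add elt_act // -gact_mul -conjgCV gact_mul.
      have := gspanA (KH Kk') S1.
      by rewrite gact_add elt_act // -gact_mul -conjgCV gact_mul.
  have Qgl : forall y, y \in gl D -> Q y.
    move=> y yg; have LDy := (proj1 (hgl D)) y yg.
    have [Vcw Pcw] := hcw (D, y) LDy.
    exists (iter j shift (cw (D, y))); rewrite Edj; split.
    - exact: Vc_shift.
    - by rewrite expgnDr gact_mul -elt_shiftn -gact_add; apply: (submA PP) => //; apply: HX.
    - rewrite expgnDr gact_mul -elt_shiftn -gact_add; apply: gspanA; first exact: HX.
      by apply: gspan_mem; apply: Tmem.
  have [c' [V' P' S']] : Q (c d).
    by apply: (gspan_min QK Qgl); apply: (proj2 (hgl D)).
  have E : elt d.+1 c = elt d (fun k => c k - c' k) + (gact (X d) (c d) + elt d c').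
    by rewrite eltS eltB [gact _ _ + _]addrC addrA subrK.
  rewrite E; apply: gspanD => //; apply: IH.
    by apply: Vc_sub => //; apply: Vc_le Vcc.
  rewrite eltB; have := submB PP Pc P'.
  by rewrite eltS [elt d c + _]addrC opprD addrACA subrr add0r.
move=> z Pz; have [a [d [c [Vcc E]]]] := Wdec_all (PX Pz).
have Pe : P (elt d c) by rewrite -E; apply: (submA PP) => //; apply: HX.
have := gspanA (sgV Hsg (HX a)) (key d c Vcc Pe).
by rewrite -E gactV.
Qed.
End Noeth.

End Step.

Lemma Noeth_step (G : groupType) (M : gmodule G) (H K : G -> Prop) :
  cyclic_normal_step H K -> (forall s : seq M, Noeth K (gspan K s)) ->
  forall s : seq M, Noeth H (gspan H s).
Proof.
move=> [Hsg Ksg KH Knorm [x Hx Hgen]] IH s P PP PX.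
exact: (P_fg Hsg KH Knorm Hx Hgen (IH s) PP PX).
Qed.

Section Poly.
Variable G : groupType.
Variable M : gmodule G.

Lemma Noeth_ext2 (H H' : G -> Prop) (s : seq M) :
  (forall g, H g <-> H' g) -> Noeth H (gspan H s) -> Noeth H' (gspan H' s).
Proof.
move=> HH NX P PP PX.
have PP' : subm H P by apply: subm_ext PP => g /HH.
have PX' : forall z, P z -> gspan H s z by move=> z /PX; apply: gspan_ext => g /HH.
have [t [tP Pt]] := NX P PP' PX'.
by exists t; split => // z /Pt; apply: gspan_ext => g /HH.
Qed.

Lemma Noeth_poly (H : G -> Prop) : polycyclic_subgroup H ->
  forall s : seq M, Noeth H (gspan H s).
Proof.
move=> [n [S [S0 Sn Sstep]]].
have claim : forall j, (j <= n)%N -> forall s : seq M, Noeth (S (n - j)%N) (gspan (S (n - j)%N) s).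
  elim=> [|j IH] jn s.
    rewrite subn0; have NZ := Noeth_Z (M:=M) (s:=s). apply: (Noeth_ext2 _ NZ) => g; rewrite /H1; split => [->|/Sn //].
    by apply/Sn.
  rewrite -(subnSK jn) in IH *.
  apply: Noeth_step; first by apply: Sstep; rewrite subnSK // leq_subr.
  by apply: IH; apply: ltnW.
move=> s; have := claim n (leqnn n) s; rewrite subnn.
by apply: Noeth_ext2 => g; apply: S0.
Qed.

Definition TG : G -> Prop := fun _ => True.

Lemma Noeth_fi (H : G -> Prop) : is_subgroup H -> finite_index H ->
  (forall s : seq M, Noeth H (gspan H s)) -> forall s : seq M, Noeth TG (gspan TG s).
Proof.
move=> Hsg [sl hsl] IH s.
pose s' := [seq gact t^-1%g y | t <- sl, y <- s].
have cos : forall g y, y \in s -> gspan H s' (gact g y).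
  move=> g y ys; have [t tsl Ht] := hsl g^-1%g.
  have -> : g = ((t^-1 * g^-1)^-1 * t^-1)%g by rewrite invgM !invgK mulgK.
  rewrite gact_mul; apply: gspanA; first exact: sgV.
  by apply: gspan_mem; apply/allpairsP; exists (t, y).
have Q : forall m, gspan H s' m -> forall g, gspan H s' (gact g m).
  move=> m sm; apply: (gspan_min (P := fun m => forall g, gspan H s' (gact g m)) _ _ sm).
    split.
    - by move=> g; rewrite gact0; apply: gspan0.
    - by move=> u v Hu Hv g; rewrite gactB; apply: gspanB.
    - by move=> h u _ Hu g; rewrite -gact_mul.
  move=> z /allpairsP [[t y] [tsl ys ->]] g /=.
  by rewrite -gact_mul; apply: cos.
have sub : forall m, gspan TG s m -> gspan H s' m.
  apply: gspan_min; first split.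
  - exact: gspan0.
  - by move=> u v; apply: gspanB.
  - by move=> h u _ /Q.
  by move=> y ys; rewrite -(gact_one y); apply: cos.
move=> P PP PX.
have PP' : subm H P by apply: subm_ext PP.
have [t [tP Pt]] := IH s' P PP' (fun z Pz => sub z (PX z Pz)).
by exists t; split => // z /Pt; apply: gspan_ext.
Qed.

Lemma Noeth_M : virtually_polycyclic G -> gmod_fin_gen M -> Noeth TG (fun _ : M => True).
Proof.
move=> [H [Hsg Hfi Hpc]] [s0 hs0] P PP _.
have all : forall m : M, gspan TG s0 m.
  move=> m; have [tt ->] := hs0 m; apply: (submSs (gspan_subm TG s0)).
  move=> p; apply: gspanMz; apply: gspanA => //.
  case: (ltnP p.2 (size s0)) => lt; first by apply: gspan_mem; apply: mem_nth.
  by rewrite nth_default //; apply: gspan0.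
have [t [tP Pt]] := Noeth_fi Hsg Hfi (Noeth_poly Hpc) PP (fun z _ => all z).
by exists t.
Qed.

End Poly.

Definition pb (P : Prop) : bool := if excluded_middle_informative P then true else false.
Lemma pbT (P : Prop) : P -> pb P = true.
Proof. by rewrite /pb; case: excluded_middle_informative. Qed.
Lemma pbF (P : Prop) : ~ P -> pb P = false.
Proof. by rewrite /pb; case: excluded_middle_informative. Qed.

Section Udim.
Variable G : groupType.
Variable M : gmodule G.
Hypothesis NM : Noeth (@TG G) (fun _ : M => True).

Local Notation sm := (@subm G M (@TG G)).
Definition nonzero (P : M -> Prop) := exists z, P z /\ z <> 0.
Definition zero : M -> Prop := fun z => z = 0.
Definition sumP (A B : M -> Prop) : M -> Prop := fun z => exists a b, [/\ A a, B b & z = a + b].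
Definition indep (N : M -> Prop) (A : nat -> M -> Prop) m :=
  forall n (a : nat -> M), N n -> (forall i, (i < m)%N -> A i (a i)) ->
  n + \sum_(i < m) a i = 0 -> n = 0 /\ forall i, (i < m)%N -> a i = 0.
Definition cnt (A : nat -> M -> Prop) m := (\sum_(i < m) pb (nonzero (A i)))%N.
Definition Bounded N := exists B, forall m A, (forall i, (i < m)%N -> sm (A i)) ->
  indep N A m -> (cnt A m <= B)%N.
Definition uniform U := [/\ sm U, nonzero U &
  forall A B, sm A -> sm B -> (forall z, A z -> U z) -> (forall z, B z -> U z) ->
    nonzero A -> nonzero B -> nonzero (fun z => A z /\ B z)].

Lemma sm_zero : sm zero.
Proof. by split => [|u v -> ->|h u _ ->]; rewrite /zero ?subr0 ?gact0. Qed.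

Lemma sm_inter A B : sm A -> sm B -> sm (fun z => A z /\ B z).
Proof.
move=> sA sB; split; first by split; [apply: (subm0 sA)|apply: (subm0 sB)].
- by move=> u v [Au Bu] [Av Bv]; split; [apply: (submB sA)|apply: (submB sB)].
- by move=> h u _ [Au Bu]; split; [apply: (submA sA)|apply: (submA sB)].
Qed.

Lemma sm_sum A B : sm A -> sm B -> sm (sumP A B).
Proof.
move=> sA sB; split.
- by exists 0, 0; split; [apply: (subm0 sA)|apply: (subm0 sB)|rewrite addr0].
- move=> u v [a1 [b1 [A1 B1 ->]]] [a2 [b2 [A2 B2 ->]]]; exists (a1 - a2), (b1 - b2).
  by split; [apply: (submB sA)|apply: (submB sB)|rewrite opprD addrACA].
- move=> h u _ [a [b [Aa Bb ->]]]; exists (gact h a), (gact h b).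
  by split; [apply: (submA sA)|apply: (submA sB)|rewrite gact_add].
Qed.

Lemma maxP (F : (M -> Prop) -> Prop) : (exists X, F X /\ sm X) ->
  exists X, [/\ F X, sm X & forall Y, F Y -> sm Y -> (forall z, X z -> Y z) -> forall z, Y z -> X z].
Proof.
move=> [X0 [FX0 sX0]]; apply: NNPP => no.
have step : forall X, F X /\ sm X -> exists Y, [/\ F Y /\ sm Y, (forall z, X z -> Y z) &
    exists z, Y z /\ ~ X z].
  move=> X [FX sX]; apply: NNPP => nY; apply: no; exists X; split => // Y FY sY XY z Yz.
  by apply: NNPP => nXz; apply: nY; exists Y; split => //; exists z.
have [f hf] : exists f : (M -> Prop) -> (M -> Prop), forall X, F X /\ sm X ->
    [/\ F (f X) /\ sm (f X), (forall z, X z -> f X z) & exists z, f X z /\ ~ X z].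
  apply: (choice_fun (R := fun X Y => F X /\ sm X -> [/\ F Y /\ sm Y, (forall z, X z -> Y z) &
    exists z, Y z /\ ~ X z])) => X.
  case: (classic (F X /\ sm X)) => [h|nh]; last by exists X.
  by have [Y hY] := step X h; exists Y.
pose sq n := iter n f X0.
have inv : forall n, F (sq n) /\ sm (sq n).
  by elim=> [|n [IH1 IH2]] //=; case: (hf (sq n)).
have mono : forall n n' z, (n <= n')%N -> sq n z -> sq n' z.
  move=> n n' z /subnK <-; elim: (n' - n)%N => [//|k IH] /IH.
  by rewrite addSn /=; case: (hf _ (inv (k + n)%N)) => _ + _; apply.
pose U z := exists n, sq n z.
have sU : sm U.
  split; first by exists 0%N; apply: (subm0 sX0).
  - move=> u v [n1 h1] [n2 h2]; exists (maxn n1 n2); apply: (submB (proj2 (inv _))).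
      by apply: mono h1; apply: leq_maxl.
    by apply: mono h2; apply: leq_maxr.
  - by move=> h u _ [n hu]; exists n; apply: (submA (proj2 (inv _))).
have [t [tU Ut]] := NM sU (fun _ _ => I).
have [N tN] := list_max (Q := sq) mono tU.
have UN : forall z, U z -> sq N z.
  by move=> z /Ut; apply: (gspan_min (proj2 (inv N)) tN).
case: (hf _ (inv N)) => _ _ [z [z1 z0]].
by apply: z0; apply: UN; exists N.+1.
Qed.

Lemma unif_exists A : sm A -> nonzero A -> exists U, uniform U /\ forall z, U z -> A z.
Proof.
move=> sA nA.
pose F X := (forall z, X z -> A z) /\ exists Y, [/\ sm Y, (forall z, Y z -> A z), nonzero Y &
   forall z, X z -> Y z -> z = 0].
have [X [[XA [Y [sY YA nY XY]]] sX Xmax]] : exists X, [/\ F X, sm X & forall Y, F Y -> sm Y ->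
    (forall z, X z -> Y z) -> forall z, Y z -> X z].
  apply: maxP; exists zero; split; last exact: sm_zero.
  split; first by move=> z ->; apply: (subm0 sA).
  by exists A; split.
exists Y; split => //; split => // A1 B1 sA1 sB1 A1Y B1Y nA1 nB1.
apply: NNPP => nAB; exfalso.
have [b [A1b b0]] := nA1.
pose X' := sumP X A1.
have FX' : F X'.
  split; first by move=> z [x1 [a1 [Xx Aa ->]]]; apply: (submD sA); [apply: XA|apply: YA; apply: A1Y].
  exists B1; split => //; first by move=> z /B1Y /YA.
  move=> z [x1 [a1 [Xx Aa ->]]] Bz.
  have ex : x1 = (x1 + a1) - a1 by rewrite addrK.
  have x10 : x1 = 0.
    apply: XY => //; rewrite ex; apply: (submB sY); [exact: B1Y|exact: A1Y].
  rewrite x10 add0r in Bz *; apply: NNPP => na; apply: nAB; exists a1; split => //.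
have := Xmax X' FX' (sm_sum sX sA1) (fun z Xz => ex_intro _ z (ex_intro _ 0 (And3 Xz (subm0 sA1) (esym (addr0 z))))) b.
move=> /(_ (ex_intro _ 0 (ex_intro _ b (And3 (subm0 sX) A1b (esym (add0r b)))))) Xb.
by apply: b0; apply: XY => //; apply: A1Y.
Qed.

Lemma unif_inter U m (B : nat -> M -> Prop) : uniform U ->
  (forall j, (j < m)%N -> [/\ sm (B j), (forall z, B j z -> U z) & nonzero (B j)]) ->
  nonzero (fun z => U z /\ forall j, (j < m)%N -> B j z).
Proof.
move=> [sU nU Uu]; elim: m => [|m IH] hB.
  by case: nU => z [Uz z0]; exists z; split => //; split => // j.
have [|z [[Uz Bz] z0]] := IH.
  by move=> j jm; apply: hB; apply: ltnW.
have [sBm BmU nBm] := hB m (ltnSn m).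
have sI : sm (fun z => U z /\ forall j, (j < m)%N -> B j z).
  split.
  - by split; [apply: (subm0 sU) | move=> j jm; case: (hB j (ltnW jm)) => + _ _; apply: subm0].
  - move=> u v [Uu' Bu] [Uv Bv]; split; first by apply: (submB sU).
    by move=> j jm; case: (hB j (ltnW jm)) => sj _ _; apply: (submB sj); [apply: Bu|apply: Bv].
  - move=> h u Th [Uu' Bu]; split; first by apply: (submA sU).
    by move=> j jm; case: (hB j (ltnW jm)) => sj _ _; apply: (submA sj) => //; apply: Bu.
have [w [[[Uw Bw] Bmw] w0]] := Uu _ _ sI sBm (fun z (h : _ /\ _) => proj1 h) BmU (ex_intro _ z (conj (conj Uz Bz) z0)) nBm.
exists w; split => //; split => // j; rewrite ltnS leq_eqVlt => /orP [/eqP ->|jm] //.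
exact: Bw.
Qed.

End Udim.

Section Udim2.
Variable G : groupType.
Variable M : gmodule G.
Hypothesis NM : Noeth (@TG G) (fun _ : M => True).
Local Notation sm := (@subm G M (@TG G)).

Definition drop1 (A : nat -> M -> Prop) j : nat -> M -> Prop :=
  fun i => if i == j then @zero G M else A i.

Lemma sum_delta m j (z : M) : (j < m)%N -> \sum_(i < m) (if (i : nat) == j then z else 0) = z.
Proof.
move=> jm; rewrite (bigD1 (Ordinal jm)) //= eqxx big1 ?addr0 // => i ne.
rewrite ifF //; apply/negbTE; move: ne; apply: contra => /eqP e.
by apply/eqP; apply: val_inj.
Qed.

Lemma nonzero_zero : ~ nonzero (@zero G M).
Proof. by case=> z [-> ]. Qed.

Lemma cnt_drop A m j : (j < m)%N -> nonzero (A j) -> (cnt (drop1 A j) m).+1 = cnt A m.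
Proof.
move=> jm nA; rewrite /cnt (bigD1 (Ordinal jm)) //= [in RHS](bigD1 (Ordinal jm)) //=.
rewrite /drop1 eqxx (pbF nonzero_zero) (pbT nA) add0n add1n; congr (_.+1).
apply: eq_bigr => i ne; rewrite ifF //; apply/negbTE; move: ne; apply: contra => /eqP e.
by apply/eqP; apply: val_inj.
Qed.

Section Exch.
Variables (N U : M -> Prop) (A : nat -> M -> Prop) (m : nat).
Hypothesis sN : sm N.
Hypothesis sA : forall i, (i < m)%N -> sm (A i).
Hypothesis iA : indep N A m.

Definition Dj j z := exists n (b : nat -> M), [/\ N n, (forall i, (i < m)%N -> A i (b i)), b j = 0 &
  z = n + \sum_(i < m) b i].

Lemma sm_Dj j : sm (Dj j).
Proof.
split.
- exists 0, (fun _ => 0); split; first exact: (subm0 sN).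
  + by move=> i im; apply: (subm0 (sA im)).
  + by [].
  + by rewrite big1 // addr0.
- move=> u v [n1 [b1 [N1 A1 b1j ->]]] [n2 [b2 [N2 A2 b2j ->]]].
  exists (n1 - n2), (fun i => b1 i - b2 i); split; first exact: (submB sN).
  + by move=> i im; apply: (submB (sA im)); [apply: A1|apply: A2].
  + by rewrite b1j b2j subr0.
  + by rewrite sumrB opprD addrACA.
- move=> h u _ [n [b [Nn Ab bj ->]]]; exists (gact h n), (fun i => gact h (b i)).
  split; first exact: (submA sN).
  + by move=> i im; apply: (submA (sA im)) => //; apply: Ab.
  + by rewrite bj gact0.
  + by rewrite gact_add gact_sum.
Qed.

Lemma indep_of j : (j < m)%N -> ~ nonzero (fun z => U z /\ Dj j z) ->
  indep (sumP N U) (drop1 A j) m.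
Proof.
move=> jm nn n' a [n [u [Nn Uu ->]]] Aa E.
have aj : a j = 0 by have := Aa j jm; rewrite /drop1 eqxx.
have Ai : forall i, (i < m)%N -> A i (a i).
  move=> i im; case: (eqVneq i j) => [->|ne]; first by rewrite aj; apply: (subm0 (sA jm)).
  by have := Aa i im; rewrite /drop1 (negbTE ne).
have eu : u = - n + \sum_(i < m) - a i.
  by rewrite sumrN -opprD; apply/eqP; rewrite -addr_eq0 addrA [u + n]addrC E.
have u0 : u = 0.
  apply: NNPP => u0; apply: nn; exists u; split => //; split => //.
  exists (- n), (fun i => - a i); split; first exact: (submN sN).
  + by move=> i im; apply: (submN (sA im)); apply: Ai.
  + by rewrite aj oppr0.
  + exact: eu.
rewrite u0 addr0 in E; rewrite u0 addr0; have [n0 a0] := iA Nn Ai E.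
by rewrite n0; split.
Qed.

Lemma exchange : uniform U -> (forall z, U z -> N z -> z = 0) ->
  (exists j, (j < m)%N /\ nonzero (A j)) ->
  exists j, [/\ (j < m)%N, nonzero (A j) & indep (sumP N U) (drop1 A j) m].
Proof.
move=> uU UN [j0 [j0m nA0]]; apply: NNPP => no.
have hB : forall j, (j < m)%N -> nonzero (A j) -> nonzero (fun z => U z /\ Dj j z).
  move=> j jm nAj; apply: NNPP => nn; apply: no; exists j; split => //.
  exact: indep_of.
case: (uU) => sU nU _.
pose B j z := U z /\ (nonzero (A j) -> Dj j z).
have [z [[Uz Bz] z0]] : nonzero (fun z => U z /\ forall j, (j < m)%N -> B j z).
  apply: unif_inter => // j jm; split.
  - split; first by split; [apply: (subm0 sU) | move=> _; apply: (subm0 (sm_Dj j))].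
    + move=> u v [Uu Du] [Uv Dv]; split; first exact: (submB sU).
      by move=> h; apply: (submB (sm_Dj j)); [apply: Du|apply: Dv].
    + move=> h u Th [Uu Du]; split; first exact: (submA sU).
      by move=> h'; apply: (submA (sm_Dj j)) => //; apply: Du.
  - by move=> z [].
  - case: (classic (nonzero (A j))) => [nAj|nAj].
      by have [z [[Uz Dz] z0]] := hB j jm nAj; exists z; split => //; split.
    by case: nU => z [Uz z0]; exists z; split => //; split.
have [n0 [b0 [N0 A0 b0j ez]]] := proj2 (Bz j0 j0m) nA0.
have b00 : forall i, (i < m)%N -> b0 i = 0.
  move=> i im; case: (classic (nonzero (A i))) => [nAi|nAi]; last first.
    by apply: NNPP => ne; apply: nAi; exists (b0 i); split => //; apply: A0.
  have [n1 [b1 [N1 A1 b1i ez1]]] := proj2 (Bz i im) nAi.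
  have hA : forall k, (k < m)%N -> A k ((fun i => b0 i - b1 i) k).
    by move=> k km; apply: (submB (sA km)); [apply: A0|apply: A1].
  have hE : (n0 - n1) + \sum_(k < m) (fun i => b0 i - b1 i) k = 0.
    by rewrite sumrB addrACA -opprD -ez -ez1 subrr.
  have [_ h] := iA (submB sN N0 N1) hA hE.
  by move: (h i im) => /eqP; rewrite b1i subr0 => /eqP.
have : z = n0 by rewrite ez big1 ?addr0 // => i _; apply: b00.
by move=> e; apply: z0; apply: UN => //; rewrite e.
Qed.
End Exch.

Lemma indep_disj X A m j : sm X -> (forall i, (i < m)%N -> sm (A i)) -> indep X A m ->
  (j < m)%N -> forall z, A j z -> X z -> z = 0.
Proof.
move=> sX sA iA jm z Az Xz.
have hA : forall i, (i < m)%N -> A i ((fun i => if i == j then z else 0) i).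
  move=> i im; case: (eqVneq i j) => [->|ne]; first by [].
  by apply: (subm0 (sA i im)).
have hE : - z + \sum_(i < m) (fun i => if (i : nat) == j then z else 0) i = 0.
  by rewrite sum_delta // addNr.
have [_ h] := @iA _ _ (submN sX Xz) hA hE.
by have := h j jm; rewrite eqxx.
Qed.

Lemma bounded0 : Bounded (@zero G M).
Proof.
apply: NNPP => nb.
have [X [nBX sX Xmax]] := maxP NM (F := fun X => ~ Bounded X) (ex_intro _ (@zero G M) (conj nb (@sm_zero G M))).
apply: (nBX).
have [m [A [sA iA cA]]] : exists m A, [/\ (forall i, (i < m)%N -> sm (A i)), indep X A m &
    (0 < cnt A m)%N].
  apply: NNPP => h; apply: nBX; exists 0%N => m A sA iA; rewrite leqNgt; apply/negP => c.
  by apply: h; exists m, A.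
have [j [jm nAj]] : exists j, (j < m)%N /\ nonzero (A j).
  apply: NNPP => h; move: cA; rewrite /cnt big1 // => i _; rewrite pbF // => nz.
  by apply: h; exists i.
have AX := indep_disj sX sA iA jm.
have [U [uU UA]] := unif_exists NM (sA j jm) nAj.
have UX : forall z, U z -> X z -> z = 0 by move=> z /UA; apply: AX.
case: (uU) => sU [u [Uu u0]] _.
have [B hB] : Bounded (sumP X U).
  apply: NNPP => nb'.
  have XX' : forall z, X z -> sumP X U z.
    by move=> z Xz; exists z, 0; split => //; [apply: (subm0 sU)|rewrite addr0].
  have X'u : sumP X U u by exists 0, u; split => //; [apply: (subm0 sX)|rewrite add0r].
  have Xu := Xmax _ nb' (sm_sum sX sU) XX' u X'u.
  by apply: u0; apply: UX.
exists B.+1 => m' A' sA' iA'.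
case: (classic (exists j, (j < m')%N /\ nonzero (A' j))) => [ex|nex].
  have [j' [j'm nA' iA'']] := exchange sX sA' iA' uU UX ex.
  rewrite -(cnt_drop j'm nA') ltnS; apply: hB iA'' => i im.
  by rewrite /drop1; case: ifP => _; [apply: sm_zero | apply: sA'].
rewrite /cnt big1 // => i _; rewrite pbF // => nz.
by apply: nex; exists i.
Qed.

End Udim2.

Lemma dep_choice (A : Type) (B : A -> Type) (R : forall a, B a -> Prop) :
  (forall a, exists b, R a b) -> exists f : (forall a, B a), forall a, R a (f a).
Proof.
move=> HR; exists (fun a => proj1_sig (constructive_indefinite_description _ (HR a))).
by move=> a; case: (constructive_indefinite_description _ (HR a)).
Qed.

Section Homs.
Variable G : groupType.

Lemma hom0 (M N : gmodule G) (f : M -> N) : gmod_hom f -> f 0 = 0.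
Proof.
move=> [fa _]; have e := fa 0 0; rewrite addr0 -{1}[f 0]addr0 in e.
by move/addrI: e.
Qed.
Lemma homB (M N : gmodule G) (f : M -> N) u v : gmod_hom f -> f (u - v) = f u - f v.
Proof.
move=> hf; have [fa _] := hf.
have eN : f (- v) = - f v.
  by apply/eqP; rewrite -subr_eq0 opprK -fa addNr (hom0 hf).
by rewrite fa eN.
Qed.
Lemma hom_comp (M N P : gmodule G) (f : M -> N) (g : N -> P) :
  gmod_hom f -> gmod_hom g -> gmod_hom (fun x => g (f x)).
Proof. by move=> [fa fg] [ga gg]; split => [u v|h m]; rewrite ?fa ?ga ?fg ?gg. Qed.
Lemma hom_sum (M N : gmodule G) (f : M -> N) n (F : nat -> M) : gmod_hom f ->
  f (\sum_(i < n) F i) = \sum_(i < n) f (F i).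
Proof.
move=> hf; elim: n => [|n IH]; first by rewrite !big_ord0 (hom0 hf).
by rewrite !big_ord_recr /= (proj1 hf) IH.
Qed.
End Homs.

Fixpoint Fh (G : groupType) (M : gmodule G) (N : nat -> gmodule G) (f1 : N 1%N -> M) (g1 : M -> N 1%N)
  (p : forall i, (N i.+1 -> N i) * (N i -> N i.+1)) (j : nat) {struct j} :
  (N j.+1 -> M) * (M -> N j.+1) :=
  match j as j0 return ((N j0.+1 -> M) * (M -> N j0.+1)) with
  | 0 => (f1, g1)
  | j'.+1 => (fun x => (Fh f1 g1 p j').1 ((p j'.+1).1 x),
              fun m => (p j'.+1).2 ((Fh f1 g1 p j').2 m))
  end.

Section Chain.
Variable G : groupType.
Variable M : gmodule G.
Variable N : nat -> gmodule G.
Variable k : nat.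
Variables (f1 : N 1%N -> M) (g1 : M -> N 1%N).
Hypotheses (hf1 : gmod_hom f1) (hg1 : gmod_hom g1) (c1 : cancel f1 g1).
Variable p : forall i, (N i.+1 -> N i) * (N i -> N i.+1).
Hypothesis hp : forall i, (1 <= i)%N -> (i < k)%N ->
  [/\ gmod_hom (p i).1, gmod_hom (p i).2, cancel (p i).1 (p i).2 & ~ gmod_iso (N i.+1) (N i)].

Local Notation F j := (Fh f1 g1 p j).

Lemma F_props j : (j < k)%N -> [/\ gmod_hom (F j).1, gmod_hom (F j).2 & cancel (F j).1 (F j).2].
Proof.
elim: j => [|j IH] jk; first by split.
have [h1 h2 h3] := IH (ltnW jk).
have [q1 q2 q3 _] := hp (ltn0Sn j) jk.
split => /=.
- exact: hom_comp q1 h1.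
- exact: hom_comp h2 q2.
- by move=> x; rewrite h3 q3.
Qed.

Definition Ej j (m : M) : M := (F j).1 ((F j).2 m).

Lemma E_hom j : (j < k)%N -> gmod_hom (Ej j).
Proof. by move=> jk; have [h1 h2 _] := F_props jk; apply: hom_comp h2 h1. Qed.

Lemma E_idem j m : (j < k)%N -> Ej j (Ej j m) = Ej j m.
Proof. by move=> jk; have [_ _ h3] := F_props jk; rewrite /Ej h3. Qed.

Lemma E_step j m : (j.+1 < k)%N ->
  Ej j.+1 (Ej j m) = Ej j.+1 m /\ Ej j (Ej j.+1 m) = Ej j.+1 m.
Proof.
move=> jk; have [_ _ h3] := F_props (ltnW jk).
by rewrite /Ej /= !h3.
Qed.

Lemma EE a b m : (a <= b)%N -> (b < k)%N ->
  Ej b (Ej a m) = Ej b m /\ Ej a (Ej b m) = Ej b m.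
Proof.
move=> /subnK <-; elim: (b - a)%N m => [|n IH] m bk.
  by rewrite add0n !E_idem.
rewrite addSn in bk *.
have [s1 s2] := E_step (Ej a m) bk.
have [t1 t2] := E_step m bk.
have [u1 u2] := IH m (ltnW bk).
have [v1 v2] := IH (Ej (n + a).+1 m) (ltnW bk).
split; first by rewrite -s1 u1 t1.
by rewrite -t2 v2 t2.
Qed.

Lemma E_neq j : (j.+1 < k)%N -> exists m, Ej j m <> Ej j.+1 m.
Proof.
move=> jk; apply: NNPP => no.
have eq : forall m, Ej j m = Ej j.+1 m by move=> m; apply: NNPP => ne; apply: no; exists m.
have [h1 h2 h3] := F_props (ltnW jk).
have [q1 q2 q3 ni] := hp (ltn0Sn j) jk.
apply: ni; exists (p j.+1).1; split => //.
exists (p j.+1).2 => // x.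
have := eq ((F j).1 x); rewrite /Ej /= h3 => e.
by rewrite -[x in RHS]h3 e h3.
Qed.

Definition dj j (m : M) := Ej j m - Ej j.+1 m.

Lemma dd i j m : (i.+1 < k)%N -> (j.+1 < k)%N ->
  dj j (dj i m) = if i == j then dj i m else 0.
Proof.
move=> ik jk.
have hj := E_hom (ltnW jk); have hj1 := E_hom jk.
rewrite /dj (homB _ _ hj) (homB _ _ hj1).
case: (ltngtP i j) => [lt|gt|<-].
- rewrite (EE m (ltnW lt) (ltnW jk)).1 (EE m lt (ltnW jk)).1.
  rewrite (EE m (leqW (ltnW lt)) jk).1 (EE m (leqW lt) jk).1.
  by rewrite !subrr.
- rewrite (EE m (ltnW gt) (ltnW ik)).2 (EE m (leqW (ltnW gt)) ik).2.
  rewrite (EE m gt (ltnW ik)).2 (EE m (leqW gt) ik).2.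
  by rewrite subrr.
- rewrite ?eqxx E_idem ?(ltnW ik) // (E_step m ik).1 (E_step m ik).2 E_idem //.
  by rewrite subrr subr0.
Qed.

Lemma dj_hom j : (j.+1 < k)%N -> gmod_hom (dj j).
Proof.
move=> jk; have [ha hg] := E_hom (ltnW jk); have [ha1 hg1'] := E_hom jk.
split => [u v|h m]; rewrite /dj.
  by rewrite ha ha1 opprD addrACA.
by rewrite hg hg1' gactB.
Qed.

End Chain.

Unset Implicit Arguments.

Theorem proposition3p10 (G : groupType) (M : gmodule G) :
  virtually_polycyclic G -> gmod_fin_gen M -> depth_finite M.
Proof.
move=> vp fg; have NM := Noeth_M vp fg.
have [B hB] := bounded0 NM.
exists B.+1 => kk N [c0 cS].
case: kk c0 cS => [|k] c0 cS; first done.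
have [f1 [g1 [hf1 hg1 cfg]]] := c0 (ltn0Sn k).
have [p hp] : exists p : (forall i, (N i.+1 -> N i) * (N i -> N i.+1)), forall i,
    (1 <= i)%N -> (i < k.+1)%N ->
    [/\ gmod_hom (p i).1, gmod_hom (p i).2, cancel (p i).1 (p i).2 & ~ gmod_iso (N i.+1) (N i)].
  have ex : forall i, exists q : (N i.+1 -> N i) * (N i -> N i.+1), (1 <= i)%N -> (i < k.+1)%N ->
      [/\ gmod_hom q.1, gmod_hom q.2, cancel q.1 q.2 & ~ gmod_iso (N i.+1) (N i)].
    move=> i; case: (classic ((1 <= i)%N /\ (i < k.+1)%N)) => [[i1 ik]|no].
      have [[f [g [hf hg cf]]] ni] := cS i i1 ik.
      by exists (f, g).
    by exists (fun _ => 0, fun _ => 0) => i1 ik; exfalso; apply: no.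
  exact: (dep_choice ex).
pose d := dj f1 g1 p.
pose C j z := exists m, z = d j m.
have sC : forall j, (j < k)%N -> subm (@TG G) (C j).
  move=> j jk; have hd := dj_hom hf1 hg1 cfg hp (j:=j) jk.
  split.
  - by exists 0; rewrite /d (hom0 hd).
  - by move=> u v [m1 ->] [m2 ->]; exists (m1 - m2); rewrite /d (homB _ _ hd).
  - by move=> h u _ [m1 ->]; exists (gact h m1); rewrite /d (proj2 hd).
have iC : indep (@zero G M) C k.
  move=> n a n0 Ca; rewrite n0 add0r => E; split => // j jk.
  have hd := dj_hom hf1 hg1 cfg hp (j:=j) jk.
  have ed : d j (\sum_(i < k) a i) = a j.
    rewrite /d (hom_sum _ _ hd) -[RHS](sum_delta (a j) jk); apply: eq_bigr => i _.
    have [m em] := Ca i (ltn_ord i).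
    rewrite em /d (dd hf1 hg1 cfg hp) //; case: (eqVneq (i : nat) j) => // eij.
    by rewrite -eij em.
    by rewrite ltnS ltn_ord.
    by rewrite ltnS ltn_ord.
  by rewrite -ed E /d (hom0 hd).
have := hB k C sC iC.
have -> : cnt C k = k.
  rewrite /cnt (eq_bigr (fun _ => 1%N)).
    by elim: k {hp sC iC cS c0} => [|k IH]; rewrite ?big_ord0 // big_ord_recr /= IH addn1.
  move=> i _; rewrite pbT //.
  have [m ne] := E_neq hf1 hg1 cfg hp (j:=i) (ltn_ord i).
  exists (d i m); split; first by exists m.
  by move/eqP; rewrite subr_eq0 => /eqP.
done.
Qed.
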